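(* Let $\ell_1,t_1,k$ be positive integers and $\ell=\ell_1+t_1$. Consider the signature scheme RSA-FDH with message space $\{0,1\}^{\ell}$ and hash function $h:\{0,1\}^{\ell}\to\{0,1\}^{k}$, in the common chosen prefix collision tractable random oracle model $\mathrm{common\text{-}CP\text{-}CT\text{-}ROM}_{(\ell_1,t_1,k)}$. Then there exists a PPT adversary $\mathcal{A}$ which, by making queries to the signing oracle and to the common chosen prefix collision oracle $\mathcal{COMMON\text{-}CP\text{-}CO}^h$, outputs a valid forgery in the EUF-CMA game (i.e. breaks RSA-FDH) with probability at least $1-e^{(1-2^{\ell_1})/2^k}$.
   Context: Model $\mathrm{common\text{-}CP\text{-}CT\text{-}ROM}_{(\ell_1,t_1,k)}$: let $M=\{0,1\}^{\ell_1}$, $R=\{0,1\}^{t_1}$, $X=M\times R$ (an element $(m,r)$ is written as the string $m\|r$), $Y=\{0,1\}^k$, and let $h:X\to Y$ be a uniformly random function with table $\mathbb{T}_h=\{(x,h(x)):x\in X\}$. All parties may query the random oracle $\mathcal{RO}^h(x)$, which returns $h(x)$, and the oracle $\mathcal{COMMON\text{-}CP\text{-}CO}^h(r)$: given $r$ with $|r|=t_1$, it picks an entry $(m\|r,y)\in\mathbb{T}_h$ uniformly at random among entries whose input ends in $r$; if there is another entry $(m'\|r,y)\in\mathbb{T}_h$ with $m'\neq m$, it picks such an entry uniformly at random and returns $(m\|r,m'\|r)$; otherwise it returns $\perp$. RSA-FDH: $\mathsf{RSAGen}(1^k)$ chooses distinct random $k/2$-bit primes $p,q$, sets $N=pq$,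 $\phi=(p-1)(q-1)$, picks $e$ at random from $\mathbb{Z}_{\phi}$ and computes $d$ with $ed\equiv1\pmod{\phi}$. Key generation outputs $vk=(N,e)$, $sk=(N,d)$. $\mathsf{Sign}(sk,m)$ returns $\sigma=h(m)^d\bmod N$. $\mathsf{Verify}(vk,m,\sigma)$ returns 1 iff $h(m)=\sigma^e\bmod N$. EUF-CMA game: the challenger generates $(sk,vk)$ and gives $vk$ to the adversary, who may query the signing oracle on messages of its choice (receiving $\mathsf{Sign}(sk,m)$) as well as the model's oracles, and finally outputs $(m^*,\sigma^* )$; the adversary breaks the scheme (outputs a valid forgery) if $\mathsf{Verify}(vk,m^*,\sigma^* )=1$ and $m^*$ was never queried to the signing oracle. *)

(* Defs.v *)
From HB Require Import structures.
From mathcomp Require Import all_boot all_order all_algebra.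
From mathcomp Require Import reals sequences exp.

Set Implicit Arguments.
Unset Strict Implicit.
Unset Printing Implicit Defensive.

Import Order.TTheory GRing.Theory Num.Theory.
Local Open Scope ring_scope.

Definition bits2nat (s : seq bool) : nat :=
  foldl (fun n (b : bool) => (n.*2 + b)%N) 0%N s.

Definition kbit_prime (j p : nat) : bool :=
  prime p && (2 ^ j.-1 <= p < 2 ^ j)%N.

Definition rsa_phi (p q : nat) : nat := (p.-1 * q.-1)%N.

Definition inv_mod (e phi : nat) : nat :=
  odflt 0%N (omap (@nat_of_ord phi) [pick d : 'I_phi | (e * d == 1 %[mod phi])%N]).

Definition avg {R : realType} {T : finType} (P : pred T) (f : T -> R) : R :=
  (\sum_(x | P x) f x) / (#|P|)%:R.

(* Adversaries: straight-line oracle programs over registers.         *)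
(* Every instruction is a single oracle call, a register move, or the *)
(* loading of a constant; hence running time is linear in the program *)
(* cost below (times the oracle/IO cost): such adversaries are PPT.   *)
(* No arithmetic is available (so the adversary cannot e.g. factor N).*)
Inductive regval := VBits of seq bool | VNum of nat | VBot.

Inductive instr :=
| IConst of nat & seq bool          (* IConst dst s   : dst <- s               *)
| IVk of nat & nat                  (* IVk dN de      : dN <- N ; de <- e      *)
| IRO of nat & nat                  (* IRO src dst    : dst <- RO(src)         *)
| ICO of nat & nat & nat            (* ICO src d1 d2  : (d1,d2) <- CO(src)     *)
| ISign of nat & nat.               (* ISign src dst  : dst <- Sign(sk, src)   *)

Record adversary := Adversary {
  adv_body : seq instr;
  adv_out_msg : nat;
  adv_out_sig : nat }.

Definition instr_cost (i : instr) : nat :=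
  match i with IConst _ s => (size s).+1 | _ => 1%N end.

Definition adv_cost (A : adversary) : nat :=
  (\sum_(i <- adv_body A) instr_cost i)%N.

Definition upd (st : nat -> regval) (i : nat) (v : regval) : nat -> regval :=
  fun j => if j == i then v else st j.

Section Game.
Variables (R : realType) (l1 t1 k : nat).

Notation X := ((l1 + t1).-tuple bool).   (* X = M x R, x = m || r *)
Notation Y := (k.-tuple bool).
Notation Mt := (l1.-tuple bool).

Section Exec.
Variables (h : {ffun X -> Y}) (N e d : nat).

Definition hs (s : seq bool) : option (seq bool) :=
  omap (fun x : X => val (h x)) (insub s).

(* The result is the expected value of [fin] on the final registers and
   signing log, the expectation being over the collision oracle's coins. *)
Fixpoint exec (prog : seq instr) (st : nat -> regval) (log : seq (seq bool))
  (fin : (nat -> regval) -> seq (seq bool) -> R) : R :=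
  match prog with
  | [::] => fin st log
  | i :: prog' =>
    match i with
    | IConst dst s => exec prog' (upd st dst (VBits s)) log fin
    | IVk dN de => exec prog' (upd (upd st dN (VNum N)) de (VNum e)) log fin
    | IRO src dst =>
        let v := match st src with
                 | VBits s => if hs s is Some y then VBits y else VBot
                 | _ => VBot end in
        exec prog' (upd st dst v) log fin
    | ISign src dst =>
        match st src with
        | VBits s =>
            if hs s is Some y then
              exec prog' (upd st dst (VNum (bits2nat y ^ d %% N)%N)) (rcons log s) fin
            else exec prog' (upd st dst VBot) log fin
        | _ => exec prog' (upd st dst VBot) log fin
        end
    | ICO src d1 d2 =>
        let fail := exec prog' (upd (upd st d1 VBot) d2 VBot) log fin in
        match st src with
        | VBits r =>
          if size r == t1 then
            avg (fun _ : Mt => true) (fun m : Mt =>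
              let P := fun m' : Mt => (m' != m) && (hs (val m' ++ r) == hs (val m ++ r)) in
              if #|P| == 0%N then fail
              else avg P (fun m' : Mt =>
                     exec prog' (upd (upd st d1 (VBits (val m ++ r))) d2
                                   (VBits (val m' ++ r))) log fin))
          else fail
        | _ => fail
        end
    end
  end.

Definition rsa_verify (s : seq bool) (sg : nat) : bool :=
  if hs s is Some y then (bits2nat y == sg ^ e %[mod N])%N else false.

Definition forgery (A : adversary) (st : nat -> regval) (log : seq (seq bool)) : R :=
  match st (adv_out_msg A), st (adv_out_sig A) with
  | VBits s, VNum sg => (rsa_verify s sg && (s \notin log))%:R
  | _, _ => 0
  end.

Definition run (A : adversary) : R :=
  exec (adv_body A) (fun _ => VBot) [::] (forgery A).

End Exec.

Definition valid_pq (pq : 'I_(2 ^ (k %/ 2)) * 'I_(2 ^ (k %/ 2))) : bool :=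
  (pq.1 != pq.2 :> nat) && kbit_prime (k %/ 2) pq.1 && kbit_prime (k %/ 2) pq.2.

Definition euf_cma_win (A : adversary) : R :=
  avg valid_pq (fun pq =>
    let p := nat_of_ord pq.1 in let q := nat_of_ord pq.2 in
    let phi := rsa_phi p q in
    avg (fun e : 'I_phi => coprime e phi) (fun e =>
      avg (fun _ : {ffun X -> Y} => true) (fun h =>
        run h (p * q) e (inv_mod e phi) A))).

End Game.

(* Main.v *)
Require Import Defs.
From HB Require Import structures.
From mathcomp Require Import all_boot all_order all_algebra all_solvable.
From mathcomp Require Import reals sequences exp.
From mathcomp Require Import ring lra zify.
Set Implicit Arguments.
Unset Strict Implicit.
Import Order.TTheory GRing.Theory Num.Theory.

Lemma fermat_step p j x : prime p -> (x ^ (j * p.-1 + 1) = x %[mod p])%N.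
Proof.
move=> pp; have [px|npx] := boolP (p %| x).
  have px' : (p %| x ^ (j * p.-1 + 1))%N by rewrite expnD expn1 dvdn_mull.
  by move: px px'; rewrite /dvdn => /eqP -> /eqP ->.
have cx : coprime x p by rewrite coprime_sym prime_coprime.
have Eu := Euler_exp_totient cx; rewrite totient_prime // in Eu.
have H1 : (x ^ (j * p.-1) = 1 %[mod p])%N.
  by rewrite mulnC expnM -modnXm Eu modnXm exp1n.
by rewrite expnD expn1 -modnMml H1 modnMml mul1n.
Qed.

Lemma rsa_ok p q e d : prime p -> prime q -> p != q -> (1 < p.-1 * q.-1)%N ->
  (e * d = 1 %[mod p.-1 * q.-1])%N ->
  forall x, ((x ^ d %% (p * q)) ^ e = x %[mod p * q])%N.
Proof.
move=> pp pq npq phi1 ed x.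
set phi := (p.-1 * q.-1)%N in phi1 ed.
rewrite modnXm -expnM.
have E : (d * e = (d * e) %/ phi * phi + 1)%N.
  by rewrite {1}(divn_eq (d * e) phi) (mulnC d e) ed modn_small.
have cpq : coprime p q by rewrite prime_coprime // dvdn_prime2.
apply/eqP; rewrite chinese_remainder //; apply/andP; split; apply/eqP.
  by rewrite E /phi (mulnC p.-1) mulnA fermat_step.
by rewrite E /phi mulnA fermat_step.
Qed.

Lemma inv_modP e phi : coprime e phi -> (1 < phi)%N ->
  (e * inv_mod e phi = 1 %[mod phi])%N.
Proof.
move=> ce phi1; rewrite /inv_mod; case: pickP => [d /= /eqP Hd | H] //.
have phi0 : (0 < phi)%N by apply: ltnW.
have := H (Ordinal (ltn_pmod (e ^ (totient phi).-1) phi0)).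
rewrite /= modnMmr -expnS prednK ?totient_gt0 //.
by rewrite Euler_exp_totient // eqxx.
Qed.
Local Open Scope ring_scope.

Lemma avg_const (R : realType) (T : finType) (P : pred T) (f : T -> R) c :
  (exists x, P x) -> (forall x, P x -> f x = c) -> avg P f = c.
Proof.
move=> [x Px] Hf; rewrite /avg (eq_bigr (fun _ => c)) // sumr_const.
rewrite -[c *+ _]mulr_natr mulfK // pnatr_eq0 -lt0n; apply/card_gt0P; by exists x.
Qed.

Definition advA (t1 : nat) :=
  Adversary [:: IConst 0 (nseq t1 false); ICO 0 1 2; ISign 1 3] 2 3.

Definition fcat (l1 t1 : nat) (m : l1.-tuple bool) : (l1 + t1).-tuple bool :=
  cat_tuple m (nseq_tuple t1 false).
Arguments fcat {l1} t1 m.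

Definition coll (l1 t1 k : nat) (h : {ffun (l1 + t1).-tuple bool -> k.-tuple bool})
  (m : l1.-tuple bool) : bool :=
  [exists m', (m' != m) && (h (fcat t1 m') == h (fcat t1 m))].
Arguments coll {l1 t1 k} h m.

Lemma hsE (l1 t1 k : nat) (h : {ffun (l1 + t1).-tuple bool -> k.-tuple bool}) m :
  hs h (val m ++ nseq t1 false) = Some (val (h (fcat t1 m))).
Proof.
change (val m ++ nseq t1 false) with (val (fcat t1 m)).
by rewrite /hs valK.
Qed.

Lemma run_advA (R : realType) (l1 t1 k : nat)
  (h : {ffun (l1 + t1).-tuple bool -> k.-tuple bool}) N e d :
  (forall x, (x ^ d %% N) ^ e = x %[mod N])%N ->
  run R h N e d (advA t1) =
  avg (fun _ : l1.-tuple bool => true) (fun m => (coll h m)%:R).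
Proof.
move=> rsa; rewrite /run /=.
rewrite size_nseq eqxx /avg; congr (_ / _); apply: eq_bigr => m _.
rewrite (hsE h m) /=.
have eqP' : forall m', (hs h (val m' ++ nseq t1 false) == Some (val (h (fcat t1 m))))
   = (h (fcat t1 m') == h (fcat t1 m)).
  by move=> m'; rewrite hsE (inj_eq (@Some_inj _)) (inj_eq val_inj).
rewrite /coll; case: existsP => [[m' /andP [nm' hm']] | nc].
  have -> : (#|(fun m' : l1.-tuple bool =>
       (m' != m) && (hs h (val m' ++ nseq t1 false) == Some (val (h (fcat t1 m)))))| == 0)%N = false.
    apply/negbTE; rewrite -lt0n; apply/card_gt0P; exists m'.
    by rewrite unfold_in /= eqP' nm' hm'.
  rewrite (eq_bigr (fun _ => 1)); last first.
    move=> x /andP [nx]; rewrite eqP' => /eqP hx.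
    rewrite /forgery /= /rsa_verify hsE hx rsa eqxx /= in_cons in_nil orbF.
    by rewrite eqseq_cat ?size_tuple // eqxx andbT (inj_eq val_inj) nx.
  rewrite sumr_const mulfV // pnatr_eq0 -lt0n; apply/card_gt0P; exists m'.
  by rewrite unfold_in /= eqP' nm' hm'.
have -> : (#|(fun m' : l1.-tuple bool =>
       (m' != m) && (hs h (val m' ++ nseq t1 false) == Some (val (h (fcat t1 m)))))| == 0)%N.
  apply/eqP; apply: eq_card0 => x; rewrite unfold_in /= eqP'.
  by apply/negP => Hx; apply: nc; exists x.
by rewrite /forgery /=.
Qed.
Lemma count_nocoll (R : realType) (X Y : finType) (x0 : X) (S : pred X) :
  x0 \notin S -> (0 < #|Y|)%N ->
  \sum_(h : {ffun X -> Y}) ([forall x in S, h x != h x0])%:R =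
  (#|Y|%:R ^+ #|X| * ((#|Y|%:R - 1) / #|Y|%:R) ^+ #|S| : R).
Proof.
move=> x0S Y0.
pose G (y0 : Y) (x : X) (y : Y) : R :=
  if x == x0 then (y == y0)%:R else if x \in S then (y != y0)%:R else 1.
have E : forall h : {ffun X -> Y},
    ([forall x in S, h x != h x0])%:R = \sum_y0 \prod_x G y0 x (h x).
  move=> h; rewrite (bigD1 (h x0)) //=.
  have -> : \sum_(i | i != h x0) \prod_x G i x (h x) = 0.
    apply: big1 => y0 ny0.
    by rewrite (bigD1 x0) //= /G eqxx eq_sym (negbTE ny0) mul0r.
  rewrite addr0.
  case: (boolP [forall x in S, h x != h x0]) => [/forallP H|].
    rewrite big1 // => x _; rewrite /G; case: eqP => [->|nx]; first by rewrite eqxx.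
    by case: ifP => xS //; move: (H x); rewrite xS /= => ->.
  rewrite negb_forall => /existsP [x]; rewrite negb_imply negbK => /andP [xS /eqP hx].
  have nx : x != x0 by apply: contraNneq x0S => <-.
  by rewrite (bigD1 x) //= /G (negbTE nx) xS hx eqxx /= mul0r.
rewrite (eq_bigr _ (fun h _ => E h)) exchange_big /=.
have sG : forall y0 x, \sum_y G y0 x y =
    if x == x0 then 1 else if x \in S then #|Y|%:R - 1 else #|Y|%:R.
  move=> y0 x; rewrite /G; case: (eqVneq x x0) => [_|_].
    by rewrite (bigD1 y0) //= eqxx big1 ?addr0 // => y /negbTE ->.
  have s1 : \sum_(y : Y) (1 : R) = #|Y|%:R by rewrite sumr_const.
  case: (x \in S) => //.
  rewrite (eq_bigr (fun y => 1 - (y == y0)%:R)); last by move=> y _; case: eqP => _; rewrite ?subrr ?subr0.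
  rewrite sumrB s1 (bigD1 y0) //= eqxx big1 ?addr0 // => y /negbTE ->.
  by [].
have P : forall y0, \sum_(h : {ffun X -> Y}) \prod_x G y0 x (h x) =
    (#|Y|%:R - 1) ^+ #|S| * #|Y|%:R ^+ #|[pred x | (x != x0) && (x \notin S)]|.
  move=> y0; rewrite -bigA_distr_bigA /=.
  rewrite (eq_bigr (fun x => if x == x0 then 1 else if x \in S then #|Y|%:R - 1 else #|Y|%:R)); last by move=> x _; rewrite sG.
  rewrite (bigD1 x0) //= eqxx mul1r (bigID (fun x => x \in S)) /=.
  rewrite (eq_bigr (fun _ => #|Y|%:R - 1)); last by move=> x /andP [/negbTE -> ->].
  rewrite [X in _ * X](eq_bigr (fun _ => #|Y|%:R)); last by move=> x /andP [/negbTE -> /negbTE ->].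
  rewrite !prodr_const; congr (_ ^+ _ * _ ^+ _).
  apply: eq_card => x; rewrite unfold_in /=; case: eqVneq => // ->; by rewrite (negbTE x0S).
rewrite (eq_bigr _ (fun y0 _ => P y0)) sumr_const.
have cX : #|X| = (1 + #|S| + #|[pred x | (x != x0) && (x \notin S)]|)%N.
  rewrite [LHS](cardD1 x0) -[#|[predD1 X & x0]|](cardID S) addnA.
  congr (_ + _ + _)%N.
    apply: eq_card => x; rewrite !inE andbT; case: eqVneq => // ->; by rewrite (negbTE x0S).
  apply: eq_card => x; rewrite !inE /= andbT andbC //.
rewrite cX.
rewrite (_ : #|(xpredT : pred Y)| = #|Y|) //.
have a0 : (#|Y|%:R : R) != 0 by rewrite pnatr_eq0 -lt0n.
rewrite !exprD expr1 expr_div_n.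
set a := (#|Y|%:R : R).
rewrite -mulr_natr -/a.
have an0 : a ^+ #|S| != 0 by rewrite expf_neq0.
by field.
Qed.

Lemma fcat_inj (l1 t1 : nat) : injective (@fcat l1 t1).
Proof.
move=> m1 m2 /(congr1 val) /= /eqP; rewrite eqseq_cat ?size_tuple // => /andP [/eqP H _].
exact: val_inj.
Qed.

Lemma card_nocoll (R : realType) (l1 t1 k : nat) (m : l1.-tuple bool) :
  \sum_(h : {ffun (l1 + t1).-tuple bool -> k.-tuple bool}) (~~ coll h m)%:R =
  ((2 ^+ k) ^+ #|{: (l1 + t1).-tuple bool}| * ((2 ^+ k - 1) / 2 ^+ k) ^+ (2 ^ l1).-1 : R).
Proof.
set x0 := fcat t1 m.
pose S := (fun x => (x != x0) && (x \in codom (@fcat l1 t1))) : pred ((l1 + t1).-tuple bool).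
have cS : #|S| = (2 ^ l1).-1.
  have := cardD1 x0 (fun x => x \in codom (@fcat l1 t1)).
  have -> : #|(fun x => x \in codom (@fcat l1 t1))| = #|codom (@fcat l1 t1)|.
    by apply: eq_card.
  rewrite card_codom; last exact: fcat_inj.
  rewrite unfold_in /= codom_f card_tuple card_bool => ->; rewrite add1n /=.
  by apply: eq_card => x; rewrite !inE unfold_in.
have cY : (#|{: k.-tuple bool}|%:R : R) = 2 ^+ k by rewrite card_tuple card_bool natrX.
rewrite -cS -cY -(@count_nocoll R _ _ x0 S) //; last first.
  by rewrite card_tuple card_bool expn_gt0.
  by rewrite unfold_in /= eqxx.
apply: eq_bigr => h _; congr (_%:R).
congr (nat_of_bool _).
rewrite /coll negb_exists; apply/forallP/forallP => H x.
  apply/implyP => /andP [nx] /codomP [m' Hx]; subst x.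
  have nm : m' != m by apply: contraNneq nx => ->.
  by move: (H m'); rewrite nm.
rewrite negb_and negbK; case: eqVneq => //= nm.
have := H (fcat t1 x); rewrite unfold_in /= codom_f andbT (inj_eq (@fcat_inj _ _)) nm.
by [].
Qed.

Lemma avg_swap (R : realType) (T U : finType) (F : T -> U -> R) :
  avg (fun _ : T => true) (fun t => avg (fun _ : U => true) (F t)) =
  avg (fun _ : U => true) (fun u => avg (fun _ : T => true) (F^~ u)).
Proof.
rewrite /avg mulr_suml [RHS]mulr_suml.
under eq_bigr do rewrite mulr_suml mulr_suml.
under [RHS]eq_bigr do rewrite mulr_suml mulr_suml.
rewrite exchange_big /=; apply: eq_bigr => u _; apply: eq_bigr => t _.
by rewrite mulrAC.
Qed.

Lemma V_eq (R : realType) (l1 t1 k : nat) :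
  avg (fun _ : {ffun (l1 + t1).-tuple bool -> k.-tuple bool} => true)
    (fun h => avg (fun _ : l1.-tuple bool => true) (fun m => (coll h m)%:R)) =
  1 - ((2 ^+ k - 1) / 2 ^+ k) ^+ (2 ^ l1).-1 :> R.
Proof.
rewrite avg_swap; apply: avg_const.
  by exists [tuple of nseq l1 false].
move=> m _; rewrite /avg.
rewrite (eq_bigr (fun h => 1 - (~~ coll h m)%:R)); last by move=> h _; case: (coll h m); rewrite ?subrr ?subr0.
rewrite sumrB card_nocoll sumr_const.
have -> : #|(fun _ : {ffun (l1 + t1).-tuple bool -> k.-tuple bool} => true)| =
    #|{ffun (l1 + t1).-tuple bool -> k.-tuple bool}| by apply: eq_card.
rewrite card_ffun !card_tuple card_bool natrX natrX.
set a := (2 : R) ^+ k.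
set n := (2 ^ (l1 + t1))%N.
have an : a ^+ n != 0 by rewrite expf_neq0 // expf_neq0 // pnatr_eq0.
by field.
Qed.

Lemma final_bound (R : realType) (l1 k : nat) :
  1 - expR ((1 - 2 ^+ l1) / 2 ^+ k) <=
  1 - ((2 ^+ k - 1) / 2 ^+ k) ^+ (2 ^ l1).-1 :> R.
Proof.
rewrite lerD2l lerN2.
set a := (2 : R) ^+ k.
have a0 : 0 < a by apply: exprn_gt0; lra.
have a1 : 1 <= a by apply: exprn_ege1; lra.
have an : a != 0 by rewrite gt_eqF.
have -> : (1 - 2 ^+ l1) / a = ((2 ^ l1).-1)%:R * (- a^-1).
  rewrite -subn1 natrB ?expn_gt0 // natrX.
  by field.
rewrite expRM_natl; apply: lerXn2r.
- by rewrite nnegrE divr_ge0 ?subr_ge0 // ltW.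
- by rewrite nnegrE expR_ge0.
- apply: le_trans (expR_ge1Dx _).
  by rewrite mulrBl divff // mul1r.
Qed.

Unset Implicit Arguments.

Theorem theorem1 (R : realType) (l1 t1 k : nat)
  (hl1 : (0 < l1)%N) (ht1 : (0 < t1)%N) (hk : (0 < k)%N)
  (hkeys : exists p q : nat,
      p <> q /\ kbit_prime (k %/ 2) p /\ kbit_prime (k %/ 2) q) :
  exists A : adversary,
    (adv_cost A <= 10 + (l1 + t1 + k))%N /\
    1 - expR ((1 - 2 ^+ l1) / 2 ^+ k) <= euf_cma_win R l1 t1 k A.
Proof.
exists (advA t1); split.
  rewrite /adv_cost /= !big_cons big_nil /= size_nseq; lia.
have -> : euf_cma_win R l1 t1 k (advA t1) =
  avg (fun _ : {ffun (l1 + t1).-tuple bool -> k.-tuple bool} => true)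
    (fun h => avg (fun _ : l1.-tuple bool => true) (fun m => (coll h m)%:R)).
  rewrite /euf_cma_win; apply: avg_const.
    case: hkeys => p [q [npq [kp kq]]].
    have hp : (p < 2 ^ (k %/ 2))%N by case/andP: kp => _ /andP [].
    have hq : (q < 2 ^ (k %/ 2))%N by case/andP: kq => _ /andP [].
    exists (Ordinal hp, Ordinal hq); rewrite /valid_pq /= kp kq !andbT.
    by apply/eqP.
  move=> [p q] /= /andP [/andP [npq kp] kq].
  have pp : prime p by case/andP: kp.
  have pq : prime q by case/andP: kq.
  have phi1 : (1 < rsa_phi p q)%N.
    rewrite /rsa_phi; have := prime_gt1 pp; have := prime_gt1 pq.
    move: npq; move: (nat_of_ord p) (nat_of_ord q) => P Q /eqP npq.
    case: P npq => [|[|[|P]]] //; case: Q => [|[|[|Q]]] //= npq _ _; nia.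
  apply: avg_const.
    by exists (Ordinal phi1); rewrite /= coprime1n.
  move=> e ce; rewrite /avg; congr (_ / _); apply: eq_bigr => h _.
  apply: run_advA; apply: rsa_ok => //; exact: inv_modP.
rewrite V_eq; exact: final_bound.
Qed.
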